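(* Let $n>5$ be prime, $d\ge1$, and let $\gamma$ be a probability distribution on $\mathbb{Z}_n^d$ with $\gamma(k)\in\mathbb{Q}$ for all $k$. If the random walk on $\mathbb{Z}_n^d$ with step distribution $\gamma$ is reconstructive, then the Fourier coefficients $\{\hat{\gamma}(x)\}_{x\in\mathbb{Z}_n^d}$ are pairwise distinct.
   Context: The Fourier transform is $\hat{\gamma}(x)=\sum_{k\in\mathbb{Z}_n^d}\omega_n^{k\cdot x}\gamma(k)$, where $k\cdot x=\sum_{i=1}^d k_ix_i$ in $\mathbb{Z}_n$ and $\omega_n=e^{-2\pi i/n}$. The random walk has $v(1)$ uniform on $\mathbb{Z}_n^d$ and independent steps with $\mathbb{P}(v(t+1)-v(t)=k)=\gamma(k)$. It is reconstructive if, for any two labelings $f_1,f_2:\mathbb{Z}_n^d\to\{0,1\}$, the distributions of $\{f_1(v(t))\}_{t\ge1}$ and $\{f_2(v(t))\}_{t\ge1}$ coincide only if there is $\ell$ with $f_1(k)=f_2(k+\ell)$ for all $k$. *)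

(* Defs.v *)
From mathcomp Require Import all_boot all_order all_algebra.
From mathcomp Require Import reals trigo.
From mathcomp Require Import complex.
Import GRing.Theory Num.Theory.

Set Implicit Arguments.
Unset Strict Implicit.
Unset Printing Implicit Defensive.

Local Open Scope ring_scope.

(* The group Z_n^d is represented by row vectors 'rV['Z_n]_d
   (additive group structure = componentwise addition mod n; valid for n >= 2). *)
Notation Znd n d := 'rV['Z_n]_d.

Definition is_distribution (n d : nat) (gamma : Znd n d -> rat) : Prop :=
  (forall k, 0 <= gamma k) /\ \sum_(k : Znd n d) gamma k = 1.

(* Probability that the walk v(1), ..., v(T+1) follows the vertex sequence v :
   v(1) uniform on Z_n^d, independent steps v(t+1) - v(t) with law gamma. *)
Definition path_prob (n d : nat) (gamma : Znd n d -> rat) (T : nat)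
  (v : {ffun 'I_T.+1 -> Znd n d}) : rat :=
  (#|{: Znd n d}|%:R)^-1 *
  \prod_(t < T) gamma (v (inord t.+1) - v (inord t)).

(* P( f(v(1)) = w 1, ..., f(v(T+1)) = w (T+1) ) : finite-dimensional
   (cylinder) probabilities of the observed label process {f(v(t))}_{t>=1}. *)
Definition cyl_prob (n d : nat) (gamma : Znd n d -> rat) (f : Znd n d -> bool)
  (T : nat) (w : {ffun 'I_T.+1 -> bool}) : rat :=
  \sum_(v : {ffun 'I_T.+1 -> Znd n d} | [forall t, f (v t) == w t])
     path_prob gamma v.

(* Two labelings induce the same law of the observed sequence
   (laws on {0,1}^N agree iff all cylinder probabilities agree). *)
Definition same_law (n d : nat) (gamma : Znd n d -> rat)
  (f1 f2 : Znd n d -> bool) : Prop :=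
  forall (T : nat) (w : {ffun 'I_T.+1 -> bool}),
    cyl_prob gamma f1 w = cyl_prob gamma f2 w.

Definition reconstructive (n d : nat) (gamma : Znd n d -> rat) : Prop :=
  forall f1 f2 : Znd n d -> bool,
    same_law gamma f1 f2 -> exists l : Znd n d, forall k, f1 k = f2 (k + l).

Definition dotZ (n d : nat) (k x : Znd n d) : 'Z_n :=
  \sum_(i < d) k ord0 i * x ord0 i.

Definition omega (R : realType) (n : nat) : R[i] :=
  ((cos (2 * pi / n%:R)) -i* (sin (2 * pi / n%:R)))%C.

Definition fourier (R : realType) (n d : nat) (gamma : Znd n d -> rat)
  (x : Znd n d) : R[i] :=
  \sum_(k : Znd n d) omega R n ^+ (nat_of_ord (dotZ k x)) * ratr (gamma k).

(* Main.v *)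
Require Import Defs.
From mathcomp Require Import all_boot all_order all_algebra all_field.
From mathcomp Require Import reals trigo.
From mathcomp Require Import complex.
From mathcomp Require Import ring zify.
From Stdlib Require Import Lia.
Import Order.TTheory GRing.Theory Num.Theory.
Local Open Scope ring_scope.

Lemma mulc_expl (R : realType) (a b c d : R) :
  ((a +i* b) * (c +i* d) = (a*c - b*d) +i* (a*d + b*c))%C.
Proof. by []. Qed.

Lemma omega_exp (R : realType) (n k : nat) :
  omega R n ^+ k = ((cos (k%:R * (2 * pi / n%:R))) -i* (sin (k%:R * (2 * pi / n%:R))))%C.
Proof.
elim: k => [|k IH].
  by rewrite expr0 !mul0r cos0 sin0 oppr0.
rewrite exprSr IH /omega mulc_expl.
set t := (2 * pi / n%:R).
rewrite -natr1 mulrDl mul1r cosD sinD.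
congr Complex; rewrite ?mulrNN; ring.
Qed.

Lemma omega_n (R : realType) (n : nat) : (0 < n)%N -> omega R n ^+ n = 1.
Proof.
move=> n0; rewrite omega_exp mulrCA mulfV ?pnatr_eq0 -?lt0n // mulr1.
have -> : (2 * pi : R) = pi *+ 2 by rewrite mulr_natl.
by rewrite cos2pi sin2pi oppr0.
Qed.

Lemma omega_neq1 (R : realType) (n : nat) : (2 < n)%N -> omega R n != 1.
Proof.
move=> n2; have n0 : (0 < n)%N by apply: (ltn_trans _ n2).
apply/negP => /eqP/(congr1 (@complex.Im R)) /= /eqP.
rewrite oppr_eq0; apply/negP; rewrite gt_eqF //.
apply: sin_gt0_pi; apply/andP; split.
  by rewrite divr_gt0 ?mulr_gt0 ?pi_gt0 ?ltr0n.
rewrite ltr_pdivrMr ?ltr0n //.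
by rewrite [pi * _]mulrC ltr_pM2r ?pi_gt0 ?ltr_nat.
Qed.

Definition Phi (n : nat) : {poly rat} := \poly_(i < n) 1.

Lemma size_Phi n : size (Phi n) = n.
Proof. by case: n => [|n]; rewrite /Phi ?size_poly0 // size_poly_eq ?oner_eq0. Qed.

Lemma Phi_monic n : (0 < n)%N -> Phi n \is monic.
Proof.
case: n => // n _; rewrite monicE /Phi lead_coef_poly //= oner_eq0 //.
Qed.

Lemma root_Phi (F : fieldType) (f : {rmorphism rat -> F}) n (w : F) :
  w ^+ n = 1 -> w != 1 -> root (map_poly f (Phi n)) w.
Proof.
move=> wn w1.
have -> : map_poly f (Phi n) = \poly_(i < n) (1 : F).
  apply/polyP => i; rewrite coef_map !coef_poly; case: ifP => _.
    exact: rmorph1. exact: rmorph0.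
apply/rootP; rewrite horner_poly.
under eq_bigr do rewrite mul1r.
have : (w - 1) * \sum_(i < n) w ^+ i = 0 by rewrite -subrX1 wn subrr.
by move/eqP; rewrite mulf_eq0 subr_eq0 (negbTE w1) /= => /eqP.
Qed.

Lemma Phi_irr n : prime n -> irreducible_poly (Phi n).
Proof.
move=> pn; have n0 := prime_gt0 pn; have n1 := prime_gt1 pn.
have [z pz] := C_prim_root_exists n0.
have [pf [Dpf mpf] minP] := minCpolyP z.
have Hs : size pf = n.
  rewrite -(@size_map_poly _ algC ratr) -Dpf (minCpoly_cyclotomic pz) size_cyclotomic.
  by rewrite totient_prime // prednK.
have rz : root (map_poly ratr (Phi n)) z.
  apply: root_Phi; first by apply/eqP; rewrite (prim_expr_order pz).
  apply/negP => /eqP z1; have := prim_order_dvd pz 1.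
  rewrite expr1 z1 eqxx dvdn1 => H.
  by move: n1; rewrite (eqP H).
have Epf : pf = Phi n.
  apply/eqP; rewrite -eqp_monic ?Phi_monic // -dvdp_size_eqp ?Hs ?size_Phi //.
  by have := minP (Phi n); rewrite rz => <-.
rewrite -Epf; apply/(subfx_irreducibleP (iota := ratr) (z := z)).
- by have := minP pf; rewrite dvdpp.
- by rewrite -size_poly_eq0 Hs -lt0n.
move=> q rq q0; apply: dvdp_leq => //; by have := minP q; rewrite rq => <-.
Qed.

Lemma omega_dvd (R : realType) n (q : {poly rat}) : prime n -> (2 < n)%N ->
  root (map_poly ratr q) (omega R n) -> Phi n %| q.
Proof.
move=> pn n2 rq.
have n0 : (0 < n)%N by apply: (ltn_trans _ n2).
have rP : root (map_poly ratr (Phi n)) (omega R n).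
  by apply: root_Phi; [exact: omega_n | exact: omega_neq1].
apply/negPn; rewrite -irreducible_poly_coprime ?Phi_irr //.
apply/negP => /Bezout_eq1_coprimepP [[u v] /= Huv].
have := congr1 (fun p => (map_poly (ratr : rat -> R[i]) p).[omega R n]) Huv.
rewrite /= rmorphD !rmorphM /= hornerD !hornerM (rootP rP) (rootP rq).
rewrite !mulr0 addr0 rmorph1 hornerC.
  by move/eqP; rewrite eq_sym oner_eq0.
exact: Phi_irr.
Qed.

Lemma lin_indep (R : realType) n (c : nat -> rat) : prime n -> (2 < n)%N ->
  \sum_(i < n) ratr (c i) * omega R n ^+ i = 0 ->
  forall i, (i < n)%N -> c i = c 0%N.
Proof.
move=> pn n2 H.
have n0 : (0 < n)%N by apply: (ltn_trans _ n2).
pose q := \poly_(i < n) c i.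
have rq : root (map_poly (ratr : rat -> R[i]) q) (omega R n).
  have -> : map_poly (ratr : rat -> R[i]) q = \poly_(i < n) ratr (c i).
    apply/polyP => i; rewrite coef_map !coef_poly; case: ifP => _ //.
    exact: rmorph0.
  by apply/rootP; rewrite horner_poly.
have /dvdpP [r Hr] := @omega_dvd R n q pn n2 rq.
have Hc : forall i, (i < n)%N -> c i = r`_0.
  move=> i lti.
  have [r0|rn0] := eqVneq r 0.
    have : q`_i = 0 by rewrite Hr r0 mul0r coef0.
    by rewrite coef_poly lti r0 coef0.
  have Pn0 : Phi n != 0 by rewrite -size_poly_eq0 size_Phi -lt0n.
  have : (size r <= 1)%N.
    have := size_poly n c; rewrite -/q Hr size_mul // size_Phi.
    case: (size r) => [|k]; first by []. rewrite addSn /= => Hk.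
    by move: Hk; rewrite -{2}[n]add0n leq_add2r.
  move/size1_polyC; set a := r`_0 => Er.
  have : q`_i = a by rewrite Hr Er coefCM /Phi coef_poly lti mulr1.
  by rewrite /q coef_poly lti.
by move=> i lti; rewrite (Hc i lti) (Hc 0%N n0).
Qed.

Definition pfw (n d : nat) (gamma : 'rV['Z_n]_d -> rat) (x : 'rV['Z_n]_d) (s : 'Z_n) : rat :=
  \sum_(k | dotZ k x == s) gamma k.
Arguments pfw {n d}.

Lemma fourier_pf (R : realType) n d (gamma : 'rV['Z_n]_d -> rat) x :
  fourier R gamma x = \sum_(s : 'Z_n) omega R n ^+ s * ratr (pfw gamma x s).
Proof.
rewrite /fourier (partition_big (fun k => dotZ k x) xpredT) //=.
apply: eq_bigr => s _; rewrite /pfw rmorph_sum mulr_sumr.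
by apply: eq_bigr => k /eqP ->.
Qed.

Lemma pfw_sum n d (gamma : 'rV['Z_n]_d -> rat) x :
  \sum_(s : 'Z_n) pfw gamma x s = \sum_k gamma k.
Proof.
by rewrite [RHS](partition_big (fun k => dotZ k x) xpredT).
Qed.

Lemma fourier_eq_pfw (R : realType) n d (gamma : 'rV['Z_n]_d -> rat) x y :
  prime n -> (2 < n)%N -> is_distribution gamma ->
  fourier R gamma x = fourier R gamma y -> forall s, pfw gamma x s = pfw gamma y s.
Proof.
move=> pn n2 [_ g1] Hf.
have n1 := prime_gt1 pn.
pose c (i : nat) := pfw gamma x (inord i) - pfw gamma y (inord i).
have Hs : \sum_(i < n) ratr (c i) * omega R n ^+ i = 0.
  have : fourier R gamma x - fourier R gamma y = 0 by rewrite Hf subrr.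
  rewrite !fourier_pf -sumrB.
  have -> : \sum_(i < n) ratr (c i) * omega R n ^+ i =
            \sum_(0 <= i < (Zp_trunc n).+2) ratr (c i) * omega R n ^+ i.
    by rewrite Zp_cast // big_mkord.
  move=> H0; rewrite big_mkord -[RHS]H0; apply: eq_bigr => s _.
  by rewrite /c inord_val rmorphB mulrC mulrBr.
have Hc := @lin_indep R n c pn n2 Hs.
have c00 : c 0%N = 0.
  have : \sum_(i < n) c i = 0.
    have -> : \sum_(i < n) c i = \sum_(0 <= i < (Zp_trunc n).+2) c i.
      by rewrite Zp_cast // big_mkord.
    rewrite big_mkord /c sumrB.
    under eq_bigr do rewrite inord_val.
    under [X in _ - X]eq_bigr do rewrite inord_val.
    by rewrite !pfw_sum subrr.
  rewrite (eq_bigr (fun _ => c 0%N)); last by move=> i _; apply: Hc.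
  rewrite sumr_const card_ord => /eqP; rewrite -mulr_natr mulf_eq0.
  rewrite pnatr_eq0 (negbTE (lt0n_neq0 (prime_gt0 pn))) orbF => /eqP //.
move=> s; apply/eqP; rewrite -subr_eq0.
have := Hc s; rewrite c00 /c inord_val => -> //.
by rewrite -{2}(Zp_cast n1) ltn_ord.
Qed.
Section Dot.
Variables (n d : nat).
Implicit Types (a b x y : 'rV['Z_n]_d).

Lemma dotZD a b x : dotZ (a + b) x = dotZ a x + dotZ b x.
Proof. by rewrite /dotZ -big_split; apply: eq_bigr => i _; rewrite mxE mulrDl. Qed.

Lemma dotZB a b x : dotZ (a - b) x = dotZ a x - dotZ b x.
Proof. by rewrite /dotZ -sumrB; apply: eq_bigr => i _; rewrite !mxE mulrBl. Qed.

Lemma dotZZ c a x : dotZ (c *: a) x = c * dotZ a x.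
Proof. by rewrite /dotZ mulr_sumr; apply: eq_bigr => i _; rewrite mxE mulrA. Qed.

Lemma dotZZr c a x : dotZ a (c *: x) = c * dotZ a x.
Proof. by rewrite /dotZ mulr_sumr; apply: eq_bigr => i _; rewrite mxE mulrCA. Qed.

Lemma dotZ0r a : dotZ a 0 = 0.
Proof. by rewrite /dotZ big1 // => i _; rewrite mxE mulr0. Qed.

Lemma dotZ_delta i x : dotZ (delta_mx 0 i) x = x 0 i.
Proof.
rewrite /dotZ (bigD1 i) //= big1 ?addr0; first by rewrite mxE !eqxx mul1r.
by move=> j ji; rewrite mxE eqxx /= ?(negbTE ji) 1?eq_sym ?(negbTE ji) mul0r.
Qed.

Lemma Zp_unit (z : 'Z_n) : prime n -> z != 0 -> z \is a GRing.unit.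
Proof.
move=> pn z0; have n1 := prime_gt1 pn.
rewrite -(natr_Zp z) unitZpE // prime_coprime //.
apply/negP => /dvdn_leq H.
have zpos : (0 < z)%N by rewrite lt0n; apply: contra z0 => /eqP zz; apply/eqP/val_inj.
have := ltn_ord z; rewrite [X in (_ < X)%N -> _]Zp_cast // => zlt.
by move: (H zpos); rewrite leqNgt zlt.
Qed.

Lemma exists_e x : prime n -> x != 0 -> exists e, dotZ e x = 1.
Proof.
move=> pn x0.
have [i xi] : exists i, x 0 i != 0.
  apply/existsP; apply: contraR x0; rewrite negb_exists => /forallP H.
  apply/eqP/rowP => i; rewrite mxE; exact/eqP/negbNE/H.
exists ((x 0 i)^-1 *: delta_mx 0 i).
by rewrite dotZZ dotZ_delta mulVr // Zp_unit.
Qed.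

Definition cnt x (s : 'Z_n) : nat := #|[pred a | dotZ a x == s]|.

Lemma cnt_const x s : prime n -> x != 0 -> cnt x s = cnt x 0.
Proof.
move=> pn x0; have [e He] := @exists_e x pn x0.
rewrite /cnt -!sum1_card.
rewrite (reindex_inj (addIr (s *: e))) /=.
apply: eq_bigl => a; rewrite !inE dotZD dotZZ He mulr1.
by rewrite -{2}(add0r s) (inj_eq (addIr s)).
Qed.

Lemma cnt_eq x y s : prime n -> x != 0 -> y != 0 -> cnt x s = cnt y s.
Proof.
move=> pn x0 y0; rewrite (@cnt_const x s pn x0) (@cnt_const y s pn y0).
have tot : forall z, z != 0 -> (#|'Z_n| * cnt z (0%R : 'Z_n) = #|'rV['Z_n]_d|)%N.
  move=> z z0; rewrite -sum_nat_const.
  rewrite (eq_bigr (fun s => cnt z s)); last by move=> s' _; rewrite (@cnt_const z s' pn z0).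
  rewrite /cnt; under eq_bigr do rewrite -sum1_card.
  rewrite -[#|'rV['Z_n]_d|]sum1_card (partition_big (fun a => dotZ a z) xpredT) //=.
apply/eqP; rewrite -(@eqn_pmul2l #|'Z_n|); first by rewrite tot // tot.
by rewrite card_ord.
Qed.
End Dot.
Arguments cnt {n d}.
Arguments dotZD {n d}.
Arguments dotZB {n d}.
Arguments dotZZ {n d}.
Arguments dotZZr {n d}.
Arguments dotZ0r {n d}.
Arguments dotZ_delta {n d}.
Arguments exists_e {n d}.
Arguments cnt_const {n d}.
Arguments cnt_eq {n d}.
Arguments Zp_unit {n}.
Section Walk.
Variables (V G : finZmodType) (phi : V -> G).
Hypothesis phiB : forall a b, phi (a - b) = phi a - phi b.
Variable (gamma : V -> rat).

Lemma prod_if (I : finType) (P : pred I) (F : I -> rat) :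
  \prod_i (if P i then F i else 0) = if [forall i, P i] then \prod_i F i else 0.
Proof.
case: ifP => [/forallP H | /negbT]; first by apply: eq_bigr => i _; rewrite H.
rewrite negb_forall => /existsP [i Hi].
by rewrite (bigD1 i) //= (negbTE Hi) mul0r.
Qed.

Variable T : nat.

Definition uf (u : {ffun 'I_T -> V}) (j : nat) : V :=
  if insub j is Some j' then u j' else 0.
Lemma ufE u (j : 'I_T) : uf u j = u j.
Proof. by rewrite /uf valK. Qed.
Definition build (a : V) (u : {ffun 'I_T -> V}) : {ffun 'I_T.+1 -> V} :=
  [ffun t : 'I_T.+1 => a + \sum_(0 <= j < t) uf u j].
Definition incr (v : {ffun 'I_T.+1 -> V}) : {ffun 'I_T -> V} :=
  [ffun j : 'I_T => v (inord j.+1) - v (inord j)].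

Lemma build0 a u : build a u (inord 0) = a.
Proof. by rewrite ffunE inordK // big_geq // addr0. Qed.

Lemma incr_build a u : incr (build a u) = u.
Proof.
apply/ffunP => j.
have h1 : (j.+1 < T.+1)%N by rewrite ltnS.
have h2 : (j < T.+1)%N by apply: ltnW.
rewrite !ffunE (inordK h1) (inordK h2) big_nat_recr //=.
by rewrite addrA [_ + uf u j]addrC addrK ufE.
Qed.

Lemma build_incr (v : {ffun 'I_T.+1 -> V}) : build (v (inord 0)) (incr v) = v.
Proof.
apply/ffunP => t; rewrite ffunE.
rewrite (telescope_sumr_eq (fun k => v (inord k))) //.
  by rewrite addrC subrK inord_val.
move=> k /andP [_ kt].
have kT : (k < T)%N by apply: leq_trans kt _; rewrite -ltnS.
by rewrite -[k]/(val (Ordinal kT)) ufE ffunE.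
Qed.

Lemma cond_equiv (s : {ffun 'I_T.+1 -> G}) (v : {ffun 'I_T.+1 -> V}) :
  [forall t, phi (v t) == s t] =
  (phi (v (inord 0)) == s (inord 0)) &&
  [forall j : 'I_T, phi (incr v j) == s (inord j.+1) - s (inord j)].
Proof.
apply/idP/idP.
  move/forallP => H; rewrite H /=; apply/forallP => j.
  by rewrite ffunE phiB (eqP (H _)) (eqP (H _)).
case/andP => /eqP H0 /forallP H; apply/forallP => t.
suff : forall k, (k <= T)%N -> phi (v (inord k)) = s (inord k).
  by move/(_ t); rewrite inord_val -ltnS ltn_ord => /(_ isT) ->.
elim => [|k IH] // kT.
have := H (Ordinal kT); rewrite ffunE phiB /=.
by rewrite IH ?(ltnW kT) // => /eqP /(congr1 (fun z => z + s (inord k))); rewrite !subrK.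
Qed.

Lemma walk_fiber (s : {ffun 'I_T.+1 -> G}) :
  \sum_(v : {ffun 'I_T.+1 -> V} | [forall t, phi (v t) == s t])
     \prod_(t < T) gamma (v (inord t.+1) - v (inord t))
  = #|[pred a | phi a == s (inord 0)]|%:R *
    \prod_(t < T) \sum_(u | phi u == s (inord t.+1) - s (inord t)) gamma u.
Proof.
rewrite big_mkcond /=.
rewrite (reindex (fun p : V * {ffun 'I_T -> V} => build p.1 p.2)) /=; last first.
  apply: onW_bij; exists (fun v : {ffun 'I_T.+1 -> V} => (v (inord 0), incr v)).
    by case=> a u /=; rewrite build0 incr_build.
  by move=> v; rewrite build_incr.
rewrite -(pair_big xpredT xpredT (fun a u => if [forall t, phi (build a u t) == s t]
   then \prod_(t < T) gamma (build a u (inord t.+1) - build a u (inord t)) else 0)) /=.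
have E : forall a u, (if [forall t, phi (build a u t) == s t]
   then \prod_(t < T) gamma (build a u (inord t.+1) - build a u (inord t)) else 0)
   = (if phi a == s (inord 0) then 1 else 0) *
     \prod_(t < T) (if phi (u t) == s (inord t.+1) - s (inord t) then gamma (u t) else 0).
  move=> a u; rewrite cond_equiv build0 incr_build prod_if.
  have -> : \prod_(t < T) gamma (build a u (inord t.+1) - build a u (inord t))
          = \prod_(t < T) gamma (u t).
    apply: eq_bigr => t _.
    by have := congr1 (fun f : {ffun 'I_T -> V} => f t) (incr_build a u); rewrite ffunE => ->.
  by case: (phi a == _); rewrite ?mul1r ?mul0r.
under eq_bigr do under eq_bigr do rewrite E.
under eq_bigr do rewrite -mulr_sumr.
rewrite -mulr_suml; congr (_ * _).
  by rewrite -big_mkcond /= sumr_const.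
under [RHS]eq_bigr do rewrite big_mkcond.
by rewrite bigA_distr_bigA.
Qed.

End Walk.

Lemma cyl_dot n d (gamma : 'rV['Z_n]_d -> rat) (g : 'Z_n -> bool) x T
   (w : {ffun 'I_T.+1 -> bool}) :
  cyl_prob gamma (fun k => g (dotZ k x)) w =
  \sum_(s : {ffun 'I_T.+1 -> 'Z_n} | [forall t, g (s t) == w t])
    ((#|{: 'rV['Z_n]_d}|%:R)^-1 * ((cnt x (s (inord 0)))%:R *
       \prod_(t < T) pfw gamma x (s (inord t.+1) - s (inord t)))).
Proof.
rewrite /cyl_prob (partition_big (fun v : {ffun 'I_T.+1 -> 'rV['Z_n]_d} =>
   [ffun t => dotZ (v t) x]) (fun s => [forall t, g (s t) == w t])); last first.
  by move=> v /forallP H; apply/forallP => t; rewrite ffunE.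
apply: eq_bigr => s /forallP Qs.
rewrite (eq_bigl (fun v : {ffun 'I_T.+1 -> 'rV['Z_n]_d} => [forall t, dotZ (v t) x == s t])); last first.
  move=> v; apply/idP/idP.
    by case/andP => _ /eqP <-; apply/forallP => t; rewrite ffunE.
  move/forallP => H; apply/andP; split.
    by apply/forallP => t; rewrite (eqP (H t)).
  by apply/eqP/ffunP => t; rewrite ffunE (eqP (H t)).
rewrite /path_prob -mulr_sumr.
by rewrite (@walk_fiber _ _ (fun k => dotZ k x) (fun a b => dotZB a b x)).
Qed.

Lemma same_law_xy n d (gamma : 'rV['Z_n]_d -> rat) (g : 'Z_n -> bool) x y :
  prime n -> x != 0 -> y != 0 -> (forall s, pfw gamma x s = pfw gamma y s) ->
  same_law gamma (fun k => g (dotZ k x)) (fun k => g (dotZ k y)).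
Proof.
move=> pn x0 y0 H T w; rewrite !cyl_dot; apply: eq_bigr => s _.
rewrite (cnt_eq x y _ pn x0 y0); congr (_ * (_ * _)).
by apply: eq_bigr => t _; rewrite H.
Qed.
Section Arith.
Variable n : nat.
Hypothesis pn : prime n.
Hypothesis n5 : (5 < n)%N.

Lemma Zeqf (u v : 'Z_n) (k : nat) : (0 < k < n)%N -> v - u = k%:R -> (u == v) = false.
Proof.
move=> /andP [k0 kn] H; apply/negP => /eqP uv; move: H; rewrite uv subrr.
have n1 := prime_gt1 pn.
move/(congr1 (@nat_of_ord _)); rewrite val_Zp_nat // modn_small //= => k00.
by rewrite -k00 in k0.
Qed.

Lemma Zeqf' (u v : 'Z_n) (k : nat) : (0 < k < n)%N -> u - v = k%:R -> (u == v) = false.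
Proof. by move=> H1 H2; rewrite eq_sym (@Zeqf v u k H1 H2). Qed.

Definition g1 (s : 'Z_n) := (s == 0) || (s == 1).
Definition g2 (s : 'Z_n) := [|| s == 0, s == 1 | s == 3].

Lemma case1 (a c : 'Z_n) : a != 0 -> a != 1 -> a != -1 ->
  (forall s, g1 s = g1 (a * s + c)) -> False.
Proof.
move=> a0 a1 am Hg.
have := Hg 0; rewrite mulr0 add0r /g1 eqxx /= => /esym /orP [] /eqP cE; subst c.
  have := Hg 1; rewrite mulr1 addr0 /g1 eqxx orbT => /esym /orP [] /eqP E.
    by rewrite E eqxx in a0.
  by rewrite E eqxx in a1.
have := Hg 1; rewrite mulr1 /g1 eqxx orbT => /esym /orP [] /eqP E.
  by move: am; rewrite -addr_eq0 E eqxx.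
by move: a0; rewrite -(addrK 1 a) E subrr eqxx.
Qed.

Lemma case2 (c : 'Z_n) : (forall s, g2 s = g2 (- s + c)) -> False.
Proof.
move=> Hg.
have := Hg 0; rewrite oppr0 add0r /g2 eqxx /= => /esym /orP [/eqP cE|/orP [] /eqP cE]; subst c.
- have := Hg 1; rewrite /g2 eqxx orbT /=.
  rewrite (@Zeqf (-1+0) 0 1) ?(@Zeqf (-1+0) 1 2) ?(@Zeqf (-1+0) 3 4) //; try lia; try ring.
- have := Hg 3; rewrite /g2 eqxx !orbT /=.
  rewrite (@Zeqf (-3+1) 0 2) ?(@Zeqf (-3+1) 1 3) ?(@Zeqf (-3+1) 3 5) //; try lia; try ring.
- have := Hg 1; rewrite /g2 eqxx orbT /=.
  rewrite (@Zeqf' (-1+3) 0 2) ?(@Zeqf' (-1+3) 1 1) ?(@Zeqf (-1+3) 3 1) //; try lia; try ring.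
Qed.
End Arith.

Lemma dotZ0l n d (x : 'rV['Z_n]_d) : dotZ 0 x = 0.
Proof. by rewrite /dotZ big1 // => i _; rewrite mxE mul0r. Qed.

Lemma exists_nz n d (x : 'rV['Z_n]_d) : x != 0 -> exists i, x 0 i != 0.
Proof.
move=> x0; apply/existsP; apply: contraR x0; rewrite negb_exists => /forallP H.
apply/eqP/rowP => i; rewrite mxE; exact/eqP/negbNE/H.
Qed.

Lemma nonrec n d (gamma : 'rV['Z_n]_d -> rat) x y :
  prime n -> (5 < n)%N -> x != 0 -> y != 0 -> x != y ->
  (forall s, pfw gamma x s = pfw gamma y s) -> reconstructive gamma -> False.
Proof.
move=> pn n5 x0 y0 xy H rec.
have [e He] := exists_e x pn x0.
case: (boolP [exists a : 'Z_n, y == a *: x]) => [/existsP [a /eqP ya] | nex].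
  have a0 : a != 0 by apply: contra y0 => /eqP a0'; rewrite ya a0' scale0r.
  have a1 : a != 1 by apply: contra xy => /eqP a1'; rewrite ya a1' scale1r.
  pose g (s : 'Z_n) := if a == -1 then g2 n s else g1 n s.
  have [l Hl] := rec _ _ (@same_law_xy _ _ gamma g x y pn x0 y0 H).
  have Hg : forall s, g s = g (a * s + a * dotZ l x).
    move=> s; have := Hl (s *: e).
    by rewrite dotZD ya !dotZZr !dotZZ He mulr1.
  case: (eqVneq a (-1)) => [am|am].
    move: Hg; rewrite /g am eqxx => Hg.
    apply: (@case2 n pn n5 (-1 * dotZ l x)) => s.
    by rewrite (Hg s); congr (g2 n (_ + _)); ring.
  move: Hg; rewrite /g (negbTE am) => Hg.
  exact: (@case1 n a (a * dotZ l x) a0 a1 am Hg).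
pose g (s : 'Z_n) := s == 0.
have [l Hl] := rec _ _ (@same_law_xy _ _ gamma g x y pn x0 y0 H).
have ly : dotZ l y = 0.
  by have := Hl 0; rewrite /g add0r dotZ0l eqxx => /esym/eqP.
have Hk : forall k, (dotZ k x == 0) = (dotZ k y == 0).
  by move=> k; have := Hl k; rewrite /g dotZD ly addr0.
have [i xi] := @exists_nz _ _ x x0.
move/negP: nex; apply; apply/existsP; exists ((x 0 i)^-1 * y 0 i).
apply/eqP/rowP => j; rewrite mxE.
pose k : 'rV['Z_n]_d := x 0 j *: delta_mx 0 i - x 0 i *: delta_mx 0 j.
have kx : dotZ k x = 0 by rewrite dotZB !dotZZ !dotZ_delta mulrC subrr.
have := Hk k; rewrite kx eqxx dotZB !dotZZ !dotZ_delta => /esym.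
rewrite subr_eq0 => /eqP E.
have u := Zp_unit _ pn xi.
by rewrite -mulrA [y 0 i * _]mulrC E mulKr.
Qed.

Lemma pfw_scale n d (gamma : 'rV['Z_n]_d -> rat) x (c : 'Z_n) s :
  pfw gamma (c *: x) s = \sum_(t | c * t == s) pfw gamma x t.
Proof.
rewrite /pfw (partition_big (fun k => dotZ k x) (fun t => c * t == s)); last first.
  by move=> k; rewrite dotZZr.
apply: eq_bigr => t /eqP Ht; apply: eq_bigl => k.
apply/idP/idP; first by case/andP.
by move=> kt; rewrite kt dotZZr (eqP kt) Ht eqxx.
Qed.

Theorem theorem7 (R : realType) (n d : nat) (gamma : 'rV['Z_n]_d -> rat) :
  prime n -> (5 < n)%N -> (1 <= d)%N ->
  is_distribution gamma ->
  reconstructive gamma ->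
  forall x y : 'rV['Z_n]_d, fourier R gamma x = fourier R gamma y -> x = y.
Proof.
move=> pn n5 d1 dist rec x y Hf.
have n2 : (2 < n)%N by apply: ltn_trans n5.
have Hp := @fourier_eq_pfw R n d gamma x y pn n2 dist Hf.
apply/eqP; apply/negP => /negP xy.
have two0 : (2 : 'Z_n) != 0.
  rewrite eq_sym (@Zeqf n pn 0 2 2) //; try lia; try ring.
have two_u := Zp_unit _ pn two0.
have H2 : forall z : 'rV['Z_n]_d, z != 0 ->
    (2 *: z != 0) /\ (z != 2 *: z).
  move=> z z0; split.
    apply: contra z0 => /eqP z2; apply/eqP.
    by rewrite -[z]scale1r -(mulVr two_u) -scalerA z2 scaler0.
  apply: contra z0 => /eqP z2; apply/eqP.
  have : 2 *: z - z = 0 by rewrite -z2 subrr.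
  by rewrite scaler_nat mulr2n addrK.
have P2 : forall z s, pfw gamma (2 *: z) s = \sum_(t | 2 * t == s) pfw gamma z t.
  by move=> z s; apply: pfw_scale.
case: (eqVneq x 0) => [x0 | x0].
  subst x; have y0 : y != 0 by rewrite eq_sym.
  have [h1 h2] := H2 y y0.
  apply: (@nonrec n d gamma y (2 *: y) pn n5 y0 h1 h2 _ rec) => s.
  rewrite P2 -Hp.
  under eq_bigr do rewrite -Hp.
  by rewrite -P2 scaler0.
case: (eqVneq y 0) => [y0 | y0].
  subst y; have [h1 h2] := H2 x x0.
  apply: (@nonrec n d gamma x (2 *: x) pn n5 x0 h1 h2 _ rec) => s.
  rewrite P2.
  under eq_bigr do rewrite Hp.
  by rewrite -P2 scaler0 Hp.
exact: (@nonrec n d gamma x y pn n5 x0 y0 xy Hp rec).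
Qed.
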